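(* Let $\mathbb{Z}$ be a finite-dimensional Euclidean space, $L>0$, $G:\mathbb{Z}\to\mathbb{Z}$ $\frac1L$-co-coercive with a zero $z^*$ ($G(z^* )=0$). Let $\epsilon\in(0,1]$ and $\gamma_k:=\epsilon/\sqrt{k+1}$ for $k\ge0$. Let $\{z^k\}$ be generated from $z^0\in\mathbb{Z}$ by: for $k\ge 0$, choose $\tilde z^k$ with $\|G(z^k)-\tilde z^k\|\le\gamma_k$ and set $z^{k+1}=\beta_k z^0+(1-\beta_k)z^k-\eta_k\tilde z^k$ with $\beta_k=1/(k+2)$, $\eta_k=(1-\beta_k)/L$. Then $\|G(z^k)\|\le O(k^{-1})+O(\epsilon)$ and $\|z^{k+1}-z^k\|\le O(k^{-1})+O(\epsilon)$ for $k\ge0$; that is, there exist constants $C_1,C_2>0$ independent of $k$ and $\epsilon$ such that $\|G(z^k)\|\le C_1/(k+1)+C_2\epsilon$ and $\|z^{k+1}-z^k\|\le C_1/(k+1)+C_2\epsilon$ for all $k\ge0$.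
   Context: A map $G:\mathbb{Z}\to\mathbb{Z}$ is $c$-co-coercive if $\langle G(x_1)-G(x_2),x_1-x_2\rangle\ge c\|G(x_1)-G(x_2)\|^2$ for all $x_1,x_2$. *)

(* Defs.v *)
(* The finite-dimensional Euclidean space is modelled as
   'rV[R]_n over a real closed field R (R : rcfType, e.g. the reals),
   with the standard inner product. *)
From mathcomp Require Import all_boot all_order all_algebra.
Set Implicit Arguments. Unset Strict Implicit. Unset Printing Implicit Defensive.
Import Order.TTheory GRing.Theory Num.Theory.
Local Open Scope ring_scope.

Definition dotv (R : rcfType) (n : nat) (u v : 'rV[R]_n) : R :=
  \sum_(i < n) u 0 i * v 0 i.

Definition normv (R : rcfType) (n : nat) (u : 'rV[R]_n) : R :=
  Num.sqrt (dotv u u).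

Definition cocoercive (R : rcfType) (n : nat) (c : R)
  (G : 'rV[R]_n -> 'rV[R]_n) : Prop :=
  forall x1 x2, dotv (G x1 - G x2) (x1 - x2) >= c * (normv (G x1 - G x2)) ^+ 2.

(* Main.v *)
Require Import Defs.
From mathcomp Require Import all_boot all_order all_algebra.
From mathcomp Require Import ring lra.
Import Order.TTheory GRing.Theory Num.Theory.
Set Implicit Arguments. Unset Strict Implicit. Unset Printing Implicit Defensive.
Local Open Scope ring_scope.
Section Aux.
Variables (R : rcfType) (n : nat).
Implicit Types (u v w : 'rV[R]_n).

Lemma dotv_ge0 u : 0 <= dotv u u.
Proof. by apply: sumr_ge0 => i _; rewrite -expr2 sqr_ge0. Qed.

Lemma normv_ge0 u : 0 <= normv u.
Proof. exact: sqrtr_ge0. Qed.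

Lemma normv_sqr u : normv u ^+ 2 = dotv u u.
Proof. by rewrite /normv sqr_sqrtr // dotv_ge0. Qed.

Lemma dotvC u v : dotv u v = dotv v u.
Proof. by apply: eq_bigr => i _; rewrite mulrC. Qed.

Lemma dotv0 u v : dotv u u = 0 -> dotv u v = 0.
Proof.
move=> h.
have pos : forall i, predT i -> 0 <= u 0 i * u 0 i.
  by move=> i _; rewrite -expr2 sqr_ge0.
have h0 : forall i, u 0 i = 0.
  move=> i; have /(_ i isT) := psumr_eq0P pos h.
  by move/eqP; rewrite mulf_eq0 orbb => /eqP.
by rewrite /dotv big1 // => i _; rewrite h0 mul0r.
Qed.

Lemma cauchy_schwarz u v : dotv u v <= normv u * normv v.
Proof.
set a := normv u; set b := normv v.
have ha : 0 <= a := normv_ge0 u. have hb : 0 <= b := normv_ge0 v.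
have key : 0 <= dotv (b *: u - a *: v) (b *: u - a *: v) := dotv_ge0 _.
have e : dotv (b *: u - a *: v) (b *: u - a *: v) =
   b^+2 * dotv u u - 2 * a * b * dotv u v + a^+2 * dotv v v.
  rewrite /dotv !mulr_sumr -!sumrN -!big_split /=; apply: eq_bigr => i _.
  rewrite !mxE; ring.
rewrite e -!normv_sqr -/a -/b in key.
have [a0|apos] := eqVneq a 0.
  rewrite a0 mul0r dotv0 //. by rewrite -normv_sqr -/a a0 expr0n.
have [b0|bpos] := eqVneq b 0.
  rewrite b0 mulr0 dotvC dotv0 //. by rewrite -normv_sqr -/b b0 expr0n.
have ap : 0 < a by rewrite lt_def apos ha.
have bp : 0 < b by rewrite lt_def bpos hb.
have abp : 0 < a * b by rewrite mulr_gt0.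
have h1 : (a * b) * dotv u v <= (a * b) * (a * b) by nra.
by rewrite -(ler_pM2l abp).
Qed.

Lemma normv_triangle u v : normv (u + v) <= normv u + normv v.
Proof.
rewrite {1}/normv -(ger0_norm (addr_ge0 (normv_ge0 u) (normv_ge0 v))) -sqrtr_sqr.
rewrite ler_sqrt ?sqr_ge0 //.
have e : dotv (u + v) (u + v) = dotv u u + 2 * dotv u v + dotv v v.
  rewrite /dotv !mulr_sumr -!big_split /=; apply: eq_bigr => i _; rewrite !mxE; ring.
rewrite e -!normv_sqr; have := cauchy_schwarz u v; nra.
Qed.

Lemma normvZ (c : R) u : normv (c *: u) = `|c| * normv u.
Proof.
have e : dotv (c *: u) (c *: u) = c ^+ 2 * dotv u u.
  rewrite /dotv !mulr_sumr; apply: eq_bigr => i _; rewrite !mxE; ring.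
by rewrite /normv e sqrtrM ?sqr_ge0 // sqrtr_sqr.
Qed.

Lemma normvN u : normv (- u) = normv u.
Proof. by rewrite -scaleN1r normvZ normrN normr1 mul1r. Qed.

Lemma normv_le u v : dotv u u <= dotv v v -> normv u <= normv v.
Proof. by move=> h; rewrite /normv ler_sqrt // dotv_ge0. Qed.

End Aux.
Definition Phi (R : rcfType) (n : nat) (L a : R) (g w : 'rV[R]_n) : R :=
  a * dotv g w - a * (a - 2) / (2 * L) * dotv g g.

Lemma step_ineq (R : rcfType) (n : nat) (L : R) (G : 'rV[R]_n -> 'rV[R]_n)
  (a : R) (z0 zk zt z1 : 'rV[R]_n) :
  0 < L -> cocoercive L^-1 G -> 0 < a ->
  z1 = (a + 1)^-1 *: z0 + (1 - (a + 1)^-1) *: zk - ((1 - (a + 1)^-1) / L) *: zt ->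
  Phi L (a + 1) (G z1) (z0 - z1) >=
  Phi L a (G zk) (z0 - zk) - a ^+ 2 / (2 * L) * dotv (zt - G zk) (zt - G zk).
Proof.
move=> hL hco ha hz1.
have Q := hco z1 zk; rewrite normv_sqr in Q.
set g0 := G zk in Q *; set g1 := G z1 in Q *.
have hN := dotv_ge0 ((a + 1) *: g1 - (2 * a) *: g0 + a *: zt).
have L0 : L != 0 by rewrite gt_eqF.
have a10 : a + 1 != 0 by rewrite gt_eqF // ltr_wpDr.
have e : a * (a + 1) * (dotv (g1 - g0) (z1 - zk) - L^-1 * dotv (g1 - g0) (g1 - g0)) =
   Phi L (a + 1) g1 (z0 - z1) - Phi L a g0 (z0 - zk)
   - 1 / (2 * L) * dotv ((a + 1) *: g1 - (2 * a) *: g0 + a *: zt) ((a + 1) *: g1 - (2 * a) *: g0 + a *: zt)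
   + a ^+ 2 / (2 * L) * dotv (zt - g0) (zt - g0).
  rewrite /Phi /dotv hz1; do 3 rewrite ?mulr_sumr -?sumrN -?big_split /=. apply: eq_bigr => i _.
  rewrite !mxE; field; by rewrite L0 a10.
have Qp : 0 <= a * (a + 1) * (dotv (g1 - g0) (z1 - zk) - L^-1 * dotv (g1 - g0) (g1 - g0)).
  apply: mulr_ge0; first by apply: mulr_ge0; lra.
  by rewrite subr_ge0.
rewrite e in Qp.
have : 0 <= 1 / (2 * L) * dotv ((a + 1) *: g1 - (2 * a) *: g0 + a *: zt) ((a + 1) *: g1 - (2 * a) *: g0 + a *: zt).
  by apply: mulr_ge0 => //; rewrite divr_ge0 //; lra.
lra.
Qed.

Lemma dotv0r (R : rcfType) (n : nat) (u : 'rV[R]_n) : dotv u 0 = 0.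
Proof. by rewrite /dotv big1 // => i _; rewrite mxE mulr0. Qed.

Lemma phi_upper (R : rcfType) (n : nat) (L : R) (G : 'rV[R]_n -> 'rV[R]_n)
  (zs z0 zk : 'rV[R]_n) (a : R) :
  0 < L -> cocoercive L^-1 G -> G zs = 0 -> 0 <= a ->
  Phi L a (G zk) (z0 - zk) <=
  a * normv (G zk) * normv (z0 - zs) - a ^+ 2 / (2 * L) * dotv (G zk) (G zk).
Proof.
move=> hL hco hz ha.
have C := hco zk zs; rewrite hz subr0 normv_sqr in C.
set g := G zk in C *.
have CS := cauchy_schwarz g (z0 - zs).
have e : dotv g (z0 - zk) = dotv g (z0 - zs) - dotv g (zk - zs).
  rewrite /dotv; do 2 rewrite ?mulr_sumr -?sumrN -?big_split /=.
  by apply: eq_bigr => i _; rewrite !mxE; ring.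
rewrite /Phi e.
have h : a * (dotv g (z0 - zs) - dotv g (zk - zs)) <=
         a * (normv g * normv (z0 - zs) - L^-1 * dotv g g).
  by apply: ler_wpM2l => //; lra.
have L0 : L != 0 by rewrite gt_eqF.
have e2 : a * (normv g * normv (z0 - zs) - L^-1 * dotv g g) - a * (a - 2) / (2 * L) * dotv g g
   = a * normv g * normv (z0 - zs) - a ^+ 2 / (2 * L) * dotv g g.
  by field.
lra.
Qed.

Lemma x_bound (R : rcfType) (L D eps a x : R) :
  0 < L -> 0 <= D -> 0 < eps -> 1 <= a -> 0 <= x ->
  - (eps ^+ 2 * (a - 1) * a / (4 * L)) <= a * x * D - a ^+ 2 / (2 * L) * x ^+ 2 ->
  x <= 2 * L * D / a + eps.
Proof.
move=> hL hD he ha hx h.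
have L0 : L != 0 by rewrite gt_eqF.
have a0 : 0 < a by lra.
have h1 : 0 <= 4 * L * (a * x * D - a ^+ 2 / (2 * L) * x ^+ 2 + eps ^+ 2 * (a - 1) * a / (4 * L)).
  apply: mulr_ge0; lra.
have e : 4 * L * (a * x * D - a ^+ 2 / (2 * L) * x ^+ 2 + eps ^+ 2 * (a - 1) * a / (4 * L))
   = a * (4 * L * D * x - 2 * a * x ^+ 2 + eps ^+ 2 * (a - 1)) by field.
rewrite e pmulr_rge0 // in h1.
have e2 : 2 * L * D / a + eps = (2 * L * D + eps * a) / a by field; rewrite gt_eqF.
rewrite e2 ler_pdivlMr //.
rewrite mulrC.
case: (lerP (a * x) (2 * L * D + eps * a)) => // hc.
have hy : 0 < a * x - 2 * L * D - eps * a by lra.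
have hx0 : 0 < x.
  rewrite lt_def; apply/andP; split => //; apply/eqP => x0.
  move: hc; rewrite x0 mulr0 => hc.
  have : 0 <= L * D by apply: mulr_ge0; lra.
  have : 0 < eps * a by apply: mulr_gt0.
  lra.
have p1 : 0 < x * (a * x - 2 * L * D - eps * a) by apply: mulr_gt0.
have p2 : 0 < eps * (a * x - 2 * L * D - eps * a) by apply: mulr_gt0.
have p3 : 0 <= eps * (L * D) by apply: mulr_ge0; [lra | apply: mulr_ge0; lra].
have p4 : 0 < eps ^+ 2 * a by apply: mulr_gt0 => //; apply: exprn_gt0.
have p5 : 0 < eps ^+ 2 by apply: exprn_gt0.
nra.
Qed.

Lemma dist_step (R : rcfType) (n : nat) (L : R) (G : 'rV[R]_n -> 'rV[R]_n)
  (zs z0 zk zt z1 : 'rV[R]_n) (b eps X : R) :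
  0 < L -> cocoercive L^-1 G -> G zs = 0 -> 0 <= b -> b <= 1 -> 0 <= X -> 0 <= eps ->
  z1 = b *: z0 + (1 - b) *: zk - ((1 - b) / L) *: zt ->
  normv (G zk - zt) <= eps ->
  normv (zk - zs) <= normv (z0 - zs) + X ->
  normv (z1 - zs) <= normv (z0 - zs) + X + eps / L.
Proof.
move=> hL hco hz hb0 hb1 hX he hz1 herr hk.
have L0 : L != 0 by rewrite gt_eqF.
set g := G zk in herr *.
have e : z1 - zs = b *: (z0 - zs) + ((1 - b) *: (zk - zs - L^-1 *: g) + ((1 - b) / L) *: (g - zt)).
  by rewrite hz1; apply/rowP => i; rewrite !mxE; field.
have C := hco zk zs; rewrite hz subr0 normv_sqr -/g in C.
have ne : normv (zk - zs - L^-1 *: g) <= normv (zk - zs).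
  apply: normv_le.
  have e2 : dotv (zk - zs - L^-1 *: g) (zk - zs - L^-1 *: g) =
     dotv (zk - zs) (zk - zs) - 2 * L^-1 * dotv g (zk - zs) + L^-1 * L^-1 * dotv g g.
    rewrite /dotv; do 3 rewrite ?mulr_sumr -?sumrN -?big_split /=.
    by apply: eq_bigr => i _; rewrite !mxE; ring.
  rewrite e2.
  have Li : 0 <= L^-1 by rewrite invr_ge0 ltW.
  have := ler_wpM2l Li C.
  have : 0 <= L^-1 * L^-1 * dotv g g by apply: mulr_ge0; [apply: mulr_ge0 | apply: dotv_ge0].
  lra.
rewrite e.
have t1 := normv_triangle (b *: (z0 - zs)) ((1 - b) *: (zk - zs - L^-1 *: g) + ((1 - b) / L) *: (g - zt)).
have t2 := normv_triangle ((1 - b) *: (zk - zs - L^-1 *: g)) (((1 - b) / L) *: (g - zt)).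
have q1 : 0 <= (1 - b) / L by rewrite divr_ge0 ?subr_ge0 // ltW.
have q2 : 0 <= 1 - b by rewrite subr_ge0.
rewrite !normvZ !(ger0_norm q1) !(ger0_norm q2) (ger0_norm hb0) in t1 t2.
have b1 : 0 <= 1 - b by lra.
have m1 := ler_wpM2l b1 (le_trans ne hk).
have m2 : (1 - b) / L * normv (g - zt) <= 1 / L * eps.
  apply: ler_pM; first by rewrite divr_ge0 // ltW.
  - exact: normv_ge0.
  - by apply: ler_wpM2r; [rewrite invr_ge0 ltW | lra].
  - exact: herr.
have m3 : 0 <= b * X by apply: mulr_ge0.
have e3 : 1 / L * eps = eps / L by rewrite mul1r mulrC.
lra.
Qed.
Unset Implicit Arguments.
Theorem corollary2 (R : rcfType) (n : nat) (L : R) (G : 'rV[R]_n -> 'rV[R]_n)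
    (zstar z0 : 'rV[R]_n) :
  0 < L -> cocoercive L^-1 G -> G zstar = 0 ->
  exists C1 C2 : R, 0 < C1 /\ 0 < C2 /\
    forall (eps : R) (z zt : nat -> 'rV[R]_n),
      0 < eps -> eps <= 1 ->
      z 0%N = z0 ->
      (forall k : nat, normv (G (z k) - zt k) <= eps / Num.sqrt (k.+1)%:R) ->
      (forall k : nat,
         let beta : R := (k.+2)%:R^-1 in
         let eta : R := (1 - beta) / L in
         z k.+1 = beta *: z0 + (1 - beta) *: z k - eta *: zt k) ->
      forall k : nat,
        normv (G (z k)) <= C1 / (k.+1)%:R + C2 * eps /\
        normv (z k.+1 - z k) <= C1 / (k.+1)%:R + C2 * eps.
Proof.
move=> hL hco hz.
set D := normv (z0 - zstar).
have hD : 0 <= D := normv_ge0 _.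
have L0 : L != 0 by rewrite gt_eqF.
have LD : 0 <= L * D by apply: mulr_ge0 => //; rewrite ltW.
have L3 : 0 < 3 / L by rewrite divr_gt0.
exists (2 * L * D + 4 * D + 1), (1 + 3 / L).
split; first lra.
split; first lra.
move=> eps z zt he he1 hz0 herr hrec.
have hr : forall k, z k.+1 = ((k.+1)%:R + 1)^-1 *: z0 + (1 - ((k.+1)%:R + 1)^-1) *: z k
     - ((1 - ((k.+1)%:R + 1)^-1) / L) *: zt k.
  by move=> k; rewrite natr1; exact: hrec k.
have herr' : forall k, normv (G (z k) - zt k) <= eps.
  move=> k; apply: le_trans (herr k) _.
  have s1 : 1 <= Num.sqrt ((k.+1)%:R : R).
    by apply: le_trans (_ : Num.sqrt 1 <= _); [rewrite sqrtr1 | rewrite ler_sqrt // ler1n].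
  have s0 : 0 < Num.sqrt ((k.+1)%:R : R) by lra.
  rewrite ler_pdivrMr //; nra.
have hN : forall k, dotv (zt k - G (z k)) (zt k - G (z k)) <= eps ^+ 2 / (k.+1)%:R.
  move=> k; rewrite -normv_sqr -opprB normvN.
  have -> : eps ^+ 2 / (k.+1)%:R = (eps / Num.sqrt (k.+1)%:R) ^+ 2.
    by rewrite expr_div_n sqr_sqrtr // ler0n.
  rewrite !expr2; apply: ler_pM; [exact: normv_ge0 | exact: normv_ge0 | exact: herr | exact: herr].
have claim1 : forall k, - (eps ^+ 2 * ((k.+1)%:R - 1) * (k.+1)%:R / (4 * L)) <=
    Phi L (k.+1)%:R (G (z k)) (z0 - z k).
  elim=> [|k IH].
    rewrite hz0 /Phi [z0 - z0]subrr dotv0r.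
    have h2 := dotv_ge0 (G z0).
    have h1 : 0 <= L^-1 / 2 by rewrite divr_ge0 // invr_ge0 ltW.
    have h3 := mulr_ge0 h1 h2.
    have e1 : forall N : R, (1%:R : R) * 0 - 1%:R * (1%:R - 2) / (2 * L) * N = L^-1 / 2 * N.
      by move=> N; field.
    have e2 : (eps ^+ 2 * (1%:R - 1) * 1%:R / (4 * L)) = 0 :> R by field.
    by rewrite e1 e2 oppr0.
  have a0 : 0 < (k.+1)%:R :> R by rewrite ltr0Sn.
  have s := step_ineq hL hco a0 (hr k).
  rewrite natr1 in s.
  have p : 0 <= (k.+1)%:R ^+ 2 / (2 * L) :> R by apply: divr_ge0; [exact: sqr_ge0 | lra].
  have m := ler_wpM2l p (hN k).
  have ak : 1 + k%:R != 0 :> R by rewrite addrC natr1 pnatr_eq0.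
  have e : (k.+1)%:R ^+ 2 / (2 * L) * (eps ^+ 2 / (k.+1)%:R) = (k.+1)%:R * eps ^+ 2 / (2 * L).
    by field; rewrite L0 ak.
  have e2 : eps ^+ 2 * ((k.+2)%:R - 1) * (k.+2)%:R / (4 * L) =
       eps ^+ 2 * ((k.+1)%:R - 1) * (k.+1)%:R / (4 * L) + (k.+1)%:R * eps ^+ 2 / (2 * L).
    by rewrite -(natr1 k.+1); field.
  rewrite e2.
  move: m; rewrite e; lra.
have claim2 : forall k, normv (G (z k)) <= 2 * L * D / (k.+1)%:R + eps.
  move=> k; apply: (x_bound hL hD he _ (normv_ge0 _)); first by rewrite ler1n.
  apply: le_trans (claim1 k) _.
  rewrite normv_sqr.
  apply: phi_upper => //; exact: ler0n.
have claim3 : forall k, normv (z k - zstar) <= D + eps * k%:R / L.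
  elim=> [|k IH].
    by rewrite hz0 mulr0 mul0r addr0.
  have b0 : 0 <= ((k.+1)%:R + 1)^-1 :> R by rewrite invr_ge0 natr1 ler0n.
  have b1 : ((k.+1)%:R + 1)^-1 <= 1 :> R by rewrite invf_le1 natr1 ?ltr0Sn // ler1n.
  have X0 : 0 <= eps * k%:R / L by rewrite divr_ge0 ?mulr_ge0 ?ler0n // ltW.
  have := dist_step hL hco hz b0 b1 X0 (ltW he) (hr k) (herr' k) IH.
  have -> : eps * (k.+1)%:R / L = eps * k%:R / L + eps / L by rewrite -natr1; field.
  rewrite -/D; lra.
move=> k; split.
  apply: le_trans (claim2 k) _.
  have a0 : 0 < (k.+1)%:R :> R by rewrite ltr0Sn.
  have e : (2 * L * D + 4 * D + 1) / (k.+1)%:R = 2 * L * D / (k.+1)%:R + (4 * D + 1) / (k.+1)%:R.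
    by field; rewrite addrC natr1 pnatr_eq0.
  have : 0 <= (4 * D + 1) / (k.+1)%:R by rewrite divr_ge0 ?ltW //; lra.
  have : 0 <= 3 / L * eps by rewrite mulr_ge0 ?ltW.
  have -> : (1 + 3 / L) * eps = eps + 3 / L * eps by ring.
  rewrite e; set a := (k.+1)%:R; set b := 2 * L * D / a; set c := (4 * D + 1) / a; set q := 3 / L * eps; lra.
have a0 : 0 < (k.+1)%:R :> R by rewrite ltr0Sn.
have ka : k%:R = (k.+1)%:R - 1 :> R by rewrite -natr1 addrK.
have hrk := hr k.
have c2 := claim2 k; have c3 := claim3 k; have ek := herr' k.
rewrite ka in c3.
move: hrk c2 c3 a0; set a := (k.+1)%:R => hrk c2 c3 a0.
set b := (a + 1)^-1 in hrk *.
have b0 : 0 <= b by rewrite invr_ge0; lra.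
have et0 : 0 <= (1 - b) / L.
  apply: divr_ge0; last by rewrite ltW.
  rewrite subr_ge0 invf_le1; lra.
have ev : z k.+1 - z k = b *: (z0 - z k) + - (((1 - b) / L) *: zt k).
  by rewrite hrk; apply/rowP => i; rewrite !mxE; ring.
rewrite ev.
have t := normv_triangle (b *: (z0 - z k)) (- (((1 - b) / L) *: zt k)).
rewrite normvN !normvZ (ger0_norm b0) (ger0_norm et0) in t.
have n1 : normv (z0 - z k) <= D + normv (z k - zstar).
  have := normv_triangle (z0 - zstar) (- (z k - zstar)).
  by rewrite normvN opprB addrA subrK.
have n2 : normv (zt k) <= normv (G (z k)) + normv (G (z k) - zt k).
  have := normv_triangle (G (z k)) (- (G (z k) - zt k)).
  by rewrite normvN opprB addrC subrK.
have F1 := ler_wpM2l b0 (le_trans n1 (lerD (lexx D) c3)).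
have F2 := ler_wpM2l et0 (le_trans n2 (lerD c2 ek)).
have a10 : a + 1 != 0 by rewrite gt_eqF //; lra.
have an0 : a != 0 by rewrite gt_eqF.
have id1 : b * (D + (D + eps * (a - 1) / L)) + (1 - b) / L * (2 * L * D / a + eps + eps)
   = 4 * D / a + 3 / L * eps - (4 * D / (a * (a + 1)) + 4 * eps / ((a + 1) * L)).
  rewrite /b; field; have k0 := ler0n R k; rewrite L0 /=; apply/andP; split; rewrite gt_eqF //; lra.
have id2 : (2 * L * D + 4 * D + 1) / a = 2 * L * D / a + 4 * D / a + 1 / a by field; rewrite gt_eqF //; have k0 := ler0n R k; lra.
have id3 : (1 + 3 / L) * eps = eps + 3 / L * eps by ring.
have p1 : 0 <= 4 * D / (a * (a + 1)) by apply: divr_ge0; [lra | apply: mulr_ge0; lra].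
have p2 : 0 <= 4 * eps / ((a + 1) * L) by apply: divr_ge0; [lra | apply: mulr_ge0; lra].
have p3 : 0 <= 2 * L * D / a by apply: divr_ge0; lra.
have p4 : 0 <= 1 / a by apply: divr_ge0; lra.
clearbody b a.
rewrite id2 id3.
move: F1 F2 t id1.
move=> F1 F2 t id1; lra.
Qed.
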